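(* Let $\phi$ be a proper partial $q$-edge-coloring of a graph $G$, let $xy$ be an uncolored edge, $C\subseteq[q]$, and $\ell\in\mathbb{N}$. Run $\mathsf{VizingChain}(\phi,xy,x,C,\ell)$ and suppose it returns $((F,P),\alpha)$ (not $\mathsf{FAIL}$), where $F=(x,y_0=y,\dots,y_{k-1})$ and $P=(x_0=x,\dots,x_s)$ is an $\alpha\beta$-path. If $s\ge1$, let $j$ be such that $y_j=x_1$. Then one of the following holds: (1) $P=(x)$ and the edge $xy_{k-1}$ is $\psi$-happy, where $\psi$ is obtained from $\phi$ by shifting $F$; or (2) $\mathsf{length}(P)<\ell$ and the edge $xy_{j-1}$ is $\psi$-happy, where $\psi$ is obtained from $\phi$ by flipping $P$ and then shifting $F'=(x,y_0,\dots,y_{j-1})$; or (3) $\mathsf{length}(P)<\ell$ and the edge $xy_{k-1}$ is $\psi$-happy, where $\psi$ is obtained from $\phi$ by flipping $P$ and then shifting $F$; or (4) $\mathsf{length}(P)=\ell$. Moreover, in cases (1)–(3) the happy edge may be colored with $\alpha$ (i.e. $\alpha$ is missing at both its endpoints under $\psi$).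
   Context: Let $G=(V,E)$ be a simple graph and $q\in\mathbb{N}$. A partial $q$-edge-coloring is a map $\phi:E\to[q]\cup\{\mathsf{blank}\}$ ($\mathsf{blank}$ = uncolored); it is proper if any two distinct colored edges sharing an endpoint get different colors. For $x\in V$, $M(\phi,x):=[q]\setminus\{\phi(xy): y\in N_G(x)\}$ is the set of colors missing at $x$. An uncolored edge $xy$ is $\phi$-happy if $M(\phi,x)\cap M(\phi,y)\ne\varnothing$. A fan under $\phi$ is a sequence $F=(x,y_0,\dots,y_{k-1})$ of distinct neighbors $y_i$ of $x$ with $\phi(xy_0)=\mathsf{blank}$ and $\phi(xy_i)\in M(\phi,y_{i-1})$ for $1\le i<k$; $\mathsf{length}(F)=k$. Shifting $F$ produces the coloring $\psi$ with $\psi(xy_i)=\phi(xy_{i+1})$ for $0\le i<k-1$, $\psi(xy_{k-1})=\mathsf{blank}$, and $\psi=\phi$ elsewhere. For $\alpha,\beta\in[q]$, an $\alpha\beta$-path under $\phi$ is a sequence $P=(x_0,\dots,x_s)$ of distinct vertices with $\phi(x_0x_1)=\alpha$ and the colors of $x_ix_{i+1}$ alternating $\alpha,\beta,\alpha,\dots$; $\mathsf{length}(P)=s$, $\mathsf{vEnd}(P)=x_s$. The path $(x_0)$ has length $0$. It is maximal if it cannot be extended at either end. Flipping $P$ interchanges the colors $\alpha$ and $\beta$ on the edges of $P$. Procedure $\mathsf{MakeFan}(\phi,xy,x,C)$: set $F\gets(x,y)$, $z\gets y$, $k\gets 1$ (and write $y_0=y$). Repeat: if $C\cap M(\phi,z)=\varnothing$,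 return $\mathsf{FAIL}$. Let $\eta\gets\min (M(\phi,z)\cap C)$. Set $z\gets$ the neighbor $w$ of $x$ with $\phi(xw)=\eta$, or $z\gets\mathsf{blank}$ if no such $w$ exists. If $z=\mathsf{blank}$, return $(F,\eta,k)$. If $z=y_j$ for some vertex $y_j$ of $F$ other than $x$, return $(F,\eta,j)$. Otherwise set $y_k\gets z$, append $y_k$ to $F$, and $k\gets k+1$. Procedure $\mathsf{VizingChain}(\phi,xy,x,C,\ell)$: run $\mathsf{MakeFan}(\phi,xy,x,C)$; if it returns $\mathsf{FAIL}$, return $\mathsf{FAIL}$. Otherwise let $(F,\alpha,j)$ be its output. If $j=\mathsf{length}(F)$, return $((F,(x)),\alpha)$. If $M(\phi,x)\cap C=\varnothing$, return $\mathsf{FAIL}$. Otherwise let $\beta\gets\min(M(\phi,x)\cap C)$, let $P$ be the maximal $\alpha\beta$-path starting at $x$ if its length is at most $\ell$, and otherwise the initial segment of it consisting of its first $\ell$ edges; return $((F,P),\alpha)$. *)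

(* Defs.v *)
From mathcomp Require Import all_boot.
Set Implicit Arguments. Unset Strict Implicit. Unset Printing Implicit Defensive.

(* A partial q-edge-coloring: phi : T -> T -> option nat, read only on edges
   (phi u v for e u v), None = blank, colors are 1..q. *)
Section Vizing.
Variables (T : finType) (q : nat) (e : rel T).

Definition simple_graph := symmetric e /\ irreflexive e.

Definition coloring := T -> T -> option nat.

Definition partial_coloring (phi : coloring) :=
  (forall u v, phi u v = phi v u) /\
  (forall u v c, e u v -> phi u v = Some c -> 0 < c <= q).

Definition proper_coloring (phi : coloring) :=
  partial_coloring phi /\
  forall u v w, e u v -> e u w -> v != w -> phi u v != None -> phi u v != phi u w.

Definition missing (phi : coloring) (v : T) : pred nat :=
  [pred c | (0 < c <= q) && [forall w, ~~ (e v w && (phi v w == Some c))]].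

Definition happy (phi : coloring) (u v : T) : bool :=
  [&& e u v, phi u v == None &
      has (fun c => (c \in missing phi u) && (c \in missing phi v)) (iota 1 q)].

(* minimum of a set of colors P (only used when P meets [q]) *)
Definition minc (P : pred nat) : nat := nth 0 [seq c <- iota 1 q | P c] 0.

(* Fans are represented by x together with the sequence ys = [y_0; ...; y_{k-1}]. *)
Definition shift_fan (phi : coloring) (x : T) (ys : seq T) : coloring :=
  fun u v =>
    let g b := let i := index b ys in
               if i < (size ys).-1 then phi x (nth x ys i.+1)
               else if i < size ys then None else phi u v in
    if u == x then g v else if v == x then g u else phi u v.

Definition path_edge (P : seq T) (u v : T) : bool :=
  has (fun i => ((nth u P i, nth u P i.+1) == (u, v)) ||
                ((nth u P i, nth u P i.+1) == (v, u))) (iota 0 (size P).-1).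

Definition swap_col (a b : nat) (o : option nat) : option nat :=
  match o with
  | Some c => if c == a then Some b else if c == b then Some a else Some c
  | None => None
  end.

Definition flip_path (phi : coloring) (P : seq T) (a b : nat) : coloring :=
  fun u v => if path_edge P u v then swap_col a b (phi u v) else phi u v.

Definition ab_path (phi : coloring) (a b : nat) (P : seq T) : Prop :=
  match P with
  | [::] => False
  | x0 :: _ =>
    uniq P /\
    forall i, i < (size P).-1 ->
      e (nth x0 P i) (nth x0 P i.+1) /\
      phi (nth x0 P i) (nth x0 P i.+1) = Some (if odd i then b else a)
  end.

Definition path_length (P : seq T) : nat := (size P).-1.

Definition maximal_ab_path (phi : coloring) (a b : nat) (P : seq T) : Prop :=
  ab_path phi a b P /\
  (forall x0, ~ (exists w, w \notin P /\ e (last x0 P) w /\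
        phi (last x0 P) w = Some (if odd (path_length P) then b else a))) /\
  (forall x0, ~ (exists w, w \notin P /\ e w (head x0 P) /\ phi w (head x0 P) = Some b)).

(* MakeFan: returns None for FAIL, Some (ys, eta, j) otherwise.
   The fuel #|T|.+1 is never exhausted (each non-returning iteration appends a
   new distinct neighbour of x). *)
Fixpoint mf_loop (phi : coloring) (x : T) (C : pred nat) (fuel : nat)
    (ys : seq T) (z : T) : option (seq T * nat * nat) :=
  match fuel with
  | 0 => None
  | n.+1 =>
    let P := [pred c | (c \in missing phi z) && (c \in C)] in
    if ~~ has P (iota 1 q) then None else
    let eta := minc P in
    match [pick w | e x w && (phi x w == Some eta)] with
    | None => Some (ys, eta, size ys)
    | Some w => if w \in ys then Some (ys, eta, index w ys)
                else mf_loop phi x C n (rcons ys w) w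
    end
  end.

Definition make_fan (phi : coloring) (x y : T) (C : pred nat) :=
  mf_loop phi x C #|T|.+1 [:: y] y.

(* VizingChain(phi, xy, x, C, l) returns ((F, P), alpha), F = (x, ys). *)
Definition vizing_chain_returns (phi : coloring) (x y : T) (C : pred nat)
    (l : nat) (ys : seq T) (P : seq T) (alpha : nat) : Prop :=
  exists j, make_fan phi x y C = Some (ys, alpha, j) /\
    (if j == size ys then P = [:: x]
     else let PC := [pred c | (c \in missing phi x) && (c \in C)] in
          has PC (iota 1 q) /\
          let beta := minc PC in
          exists Pmax, head x Pmax = x /\ maximal_ab_path phi alpha beta Pmax /\
            P = (if path_length Pmax <= l then Pmax else take l.+1 Pmax)).

End Vizing.

Arguments minc q P : clear implicits.
Arguments missing T q e phi v : clear implicits.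
Arguments happy T q e phi u v : clear implicits.
Arguments vizing_chain_returns T q e phi x y C l ys P alpha : clear implicits.
Arguments proper_coloring T q e phi : clear implicits.
Arguments simple_graph T e : clear implicits.
Arguments shift_fan T phi x ys _ _ : clear implicits.
Arguments flip_path T phi P a b _ _ : clear implicits.
Arguments path_length T P : clear implicits.

(* Main.v *)
Require Import Defs.
From mathcomp Require Import all_boot.
Set Implicit Arguments. Unset Strict Implicit.

Lemma minc_spec q (P : pred nat) : has P (iota 1 q) -> P (minc q P).
Proof.
move=> h; rewrite /minc.
have: nth 0 [seq c <- iota 1 q | P c] 0 \in [seq c <- iota 1 q | P c].
  by apply: mem_nth; rewrite lt0n size_eq0 -has_filter.
by rewrite mem_filter => /andP[].
Qed.

Lemma missing_range (T : finType) q (e : rel T) (phi : coloring T) (v : T) c : c \in missing T q e phi v -> 0 < c <= q.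
Proof. by rewrite inE => /andP[]. Qed.

Lemma missingP (T : finType) q (e : rel T) (phi : coloring T) (v : T) c : c \in missing T q e phi v ->
  forall w, e v w -> phi v w <> Some c.
Proof.
rewrite inE => /andP[_ /forallP h] w evw pw.
by move: (h w); rewrite evw pw eqxx.
Qed.

Lemma missingI (T : finType) q (e : rel T) (phi : coloring T) (v : T) c : 0 < c <= q ->
  (forall w, e v w -> phi v w <> Some c) -> c \in missing T q e phi v.
Proof.
move=> r h; rewrite inE r /=; apply/forallP => w.
by apply/negP => /andP[evw /eqP pw]; apply: (h w).
Qed.
Definition fanR (T : finType) q (e : rel T) (phi : coloring T) (x : T) : rel T :=
  fun a b => if phi x b is Some c then c \in missing T q e phi a else false.

Lemma mf_spec (T : finType) q (e : rel T) (phi : coloring T) x C y fuel ys0 z ys' eta j :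
  uniq (y :: ys0) -> all (e x) (y :: ys0) -> path (fanR q e phi x) y ys0 ->
  z = last y ys0 ->
  mf_loop q e phi x C fuel (y :: ys0) z = Some (ys', eta, j) ->
  exists ys1, [/\ ys' = y :: ys1, uniq ys' && all (e x) ys', path (fanR q e phi x) y ys1,
     eta \in missing T q e phi (last y ys1) &
     ((j = size ys' /\ forall w, e x w -> phi x w <> Some eta) \/
      (exists w, [/\ w \in ys', j = index w ys', e x w & phi x w = Some eta]))].
Proof.
elim: fuel ys0 z => [|n IH] ys0 z U A Pa Z //=.
case: ifP => // /negbFE hP.
have := minc_spec hP; rewrite inE /= => /andP[mz _].
case: pickP => [w /andP[ew /eqP pw] | nw].
  case: ifP => [wi [<- <- <-] | wn].
    exists ys0; split => //; [by rewrite U A|by rewrite -Z|].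
    by right; exists w.
  apply: (IH (rcons ys0 w) w).
  - rewrite -rcons_cons rcons_uniq wn U andbT //.
  - by rewrite -rcons_cons all_rcons ew A.
  - by rewrite rcons_path Pa -Z /fanR pw.
  - by rewrite last_rcons.
move=> [<- <- <-]; exists ys0; split => //; [by rewrite U A|by rewrite -Z|].
left; split => // w0 ew0 pw0; by move: (nw w0); rewrite ew0 pw0 eqxx.
Qed.
Lemma shift_happy (T : finType) q (e : rel T) (phi0 : coloring T) x ys a :
  simple_graph T e -> uniq ys -> all (e x) ys -> ys != [::] ->
  a \in missing T q e phi0 x -> a \in missing T q e phi0 (nth x ys (size ys).-1) ->
  [/\ happy T q e (shift_fan T phi0 x ys) x (nth x ys (size ys).-1),
      a \in missing T q e (shift_fan T phi0 x ys) x &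
      a \in missing T q e (shift_fan T phi0 x ys) (nth x ys (size ys).-1)].
Proof.
move=> [sym irr] U A ne ax ay.
have sz : (size ys).-1 < size ys by move: ne; rewrite -size_eq0; case: (size ys).
set yend := nth x ys (size ys).-1.
have yin : yend \in ys by apply: mem_nth.
have exy : e x yend by move/allP: A => /(_ _ yin).
have yx : yend != x by apply/eqP => h; move: exy; rewrite h irr.
have ar := missing_range ax.
have mx : a \in missing T q e (shift_fan T phi0 x ys) x.
  apply: missingI => // w exw; rewrite /shift_fan eqxx /=.
  case: ifP => [lt|_]; last case: ifP => // _; last exact: missingP ax w exw.
  have hin : nth x ys (index w ys).+1 \in ys by apply: mem_nth; rewrite -ltn_predRL.
  by apply: missingP ax _ _; move/allP: A => /(_ _ hin).
have my : a \in missing T q e (shift_fan T phi0 x ys) yend.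
  apply: missingI => // w eyw; rewrite /shift_fan (negbTE yx) /=.
  case: ifP => [/eqP _|_]; last exact: missingP ay w eyw.
  by rewrite /yend index_uniq // ltnn sz.
split => //; rewrite /happy exy /= /shift_fan eqxx /= /yend index_uniq // ltnn sz eqxx /=.
apply/hasP; exists a; last by rewrite mx my. case/andP: ar => a1 a2. rewrite (mem_iota 1 q a) a1 add1n ltnS a2 //=.

Qed.
Lemma path_edge_mem (T : finType) (P : seq T) u v : path_edge P u v -> u \in P.
Proof.
case/hasP => i; rewrite mem_iota add0n => /andP[_ ilt].
have i1 : i.+1 < size P by rewrite -ltn_predRL.
have i0 : i < size P by apply: ltnW.
by case/orP => /eqP [h1 h2]; [rewrite -{1}h1 | rewrite -{1}h2]; apply: mem_nth.
Qed.

Lemma flip_missing_x (T : finType) q (e : rel T) (phi : coloring T) a b x P' :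
  proper_coloring T q e phi -> ab_path e phi a b (x :: P') -> 0 < size P' ->
  b \in missing T q e phi x -> a != b ->
  a \in missing T q e (flip_path T phi (x :: P') a b) x.
Proof.
move=> [[psym prange] pr] [U H] sP bx ab.
have [e1 p1] := H 0 sP.
rewrite /= in e1 p1.
have ar := prange _ _ _ e1 p1.
apply: missingI => // w exw; rewrite /flip_path; case: ifP => pe.
  case h: (phi x w) => [c|] //=.
  case: ifP => [_ [/eqP]|/negbT ca0]; first by rewrite eq_sym (negbTE ab).
  case: ifP => [/eqP cb|_ [cE]]; first by subst c; move: (missingP bx exw).
  by rewrite cE eqxx in ca0.
move=> pw; case: (w =P nth x P' 0) => [ew|/eqP nw].
  move: pe; rewrite ew /path_edge; case/hasP; exists 0; first by rewrite mem_iota.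
  by rewrite /= eqxx.
by move: (pr _ _ _ e1 exw); rewrite eq_sym nw p1 pw eqxx => /(_ isT isT).
Qed.

Lemma flip_missing_v (T : finType) q (e : rel T) (phi : coloring T) a b x0 P' v :
  simple_graph T e -> proper_coloring T q e phi -> ab_path e phi a b (x0 :: P') ->
  v != x0 -> v != last x0 P' -> a \in missing T q e phi v ->
  a \in missing T q e (flip_path T phi (x0 :: P') a b) v.
Proof.
move=> [esym _] [[psym _] _] [U H] vx vl av.
have vn : v \notin x0 :: P'.
  apply/negP => vin.
  set P := x0 :: P' in H vin.
  have ilt := vin; rewrite -index_mem in ilt.
  set i := index v P in ilt.
  have nv : nth x0 P i = v by apply: nth_index.
  have i0 : 0 < i by rewrite lt0n; apply/eqP => h; move: nv; rewrite h /= => h'; move: vx; rewrite -h' eqxx.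
  have i1 : i < (size P).-1.
    rewrite ltn_neqAle -ltnS prednK // ilt andbT; apply/eqP => h.
    by move: vl; rewrite -nv h /= nth_last eqxx.
  case oi: (odd i).
  - have [ee pp] := H i.-1 (leq_ltn_trans (leq_pred i) i1).
    rewrite prednK // nv in ee pp.
    have : odd i.-1 = false by move: oi; rewrite -{1}(prednK i0) /= => /negbTE.
    move=> oo; rewrite oo psym in pp.
    by apply: (missingP av _ pp); rewrite esym.
  - have [ee pp] := H i i1.
    rewrite nv oi in ee pp.
    exact: (missingP av ee pp).
apply: missingI; first exact: missing_range av.
move=> w evw; rewrite /flip_path.
case: ifP => [/path_edge_mem vin|_]; first by rewrite vin in vn.
exact: missingP av w evw.
Qed.

Theorem lemma3p2 (T : finType) (q : nat) (e : rel T) (phi : coloring T)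
    (x y : T) (C : pred nat) (l : nat) (ys P : seq T) (alpha : nat) :
  simple_graph T e ->
  proper_coloring T q e phi ->
  e x y -> phi x y = None ->
  {subset C <= [pred c | 0 < c <= q]} ->
  vizing_chain_returns T q e phi x y C l ys P alpha ->
  let k := size ys in
  let s := path_length T P in
  let x1 := nth x P 1 in
  let j := index x1 ys in
  let beta := minc q [pred c | (c \in missing T q e phi x) && (c \in C)] in
  let happy_alpha psi u v :=
    [/\ happy T q e psi u v, alpha \in missing T q e psi u & alpha \in missing T q e psi v] in
  (1 <= s -> x1 \in ys) /\
  [\/ P = [:: x] /\ happy_alpha (shift_fan T phi x ys) x (nth x ys k.-1),
      s < l /\ happy_alpha (shift_fan T (flip_path T phi P alpha beta) x (take j ys))
                           x (nth x ys j.-1),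
      s < l /\ happy_alpha (shift_fan T (flip_path T phi P alpha beta) x ys)
                           x (nth x ys k.-1)
    | s = l].
Proof.
move=> sg pr exy pxy Csub [jf [mf rest]]; cbv zeta.
have sg' := sg; case: sg' => [esym irr].
have pr' := pr; case: pr' => [[psym prange] prp].
have := @mf_spec T q e phi x C y _ [::] y ys alpha jf _ _ _ _ mf.
case=> //; first by rewrite /= exy.
move=> ys1 [ysE /andP[U A] Pa am cases].
have lastE : last y ys1 = nth x ys (size ys).-1 by rewrite ysE nth_last.
rewrite lastE in am.
have ar := missing_range am.
have ysn : ys != [::] by rewrite ysE.
case: cases => [[jE nop] | [w [win jE exw pxw]]].
  move: rest; rewrite jE eqxx => ->.
  split => //; apply: Or41; split => //.
  apply: shift_happy => //; apply: missingI => // w exw; exact: nop.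
have jlt : jf < size ys by rewrite jE index_mem.
move: rest; rewrite (ltn_eqF jlt) => -[hPC [Pmax [hd [[abP [mx1 _]] PE]]]].
set PC := [pred c | (c \in missing T q e phi x) && (c \in C)] in hPC PE abP mx1 *.
have /andP[bx bC] := minc_spec hPC.
set beta := minc q PC in bx bC PE abP mx1 *.
case: Pmax hd abP mx1 PE => [|x0 P'] hd abP mx1 PE; first by case: abP.
rewrite /= in hd; subst x0.
have xw : x != w by apply/eqP => h; move: exw; rewrite -h irr.
have sP : 0 < size P'.
  case: P' abP mx1 PE => // _ mx1 _; case: (mx1 x); exists w.
  by rewrite inE eq_sym xw /= exw pxw.
have [ex1 px1] := (proj2 abP) 0 sP.
rewrite /= in ex1 px1.
have x1w : nth x P' 0 = w.
  apply/eqP; apply: contraT => nw.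
  by move: (prp _ _ _ ex1 exw nw); rewrite px1 pxw eqxx => /(_ isT).
have ab : alpha != beta by apply/eqP => h; move: (missingP bx exw); rewrite -h pxw.
rewrite /path_length /= in PE mx1 *.
case: (leqP (size P') l) => hl; last first.
  rewrite PE (leqNgt (size P') l) hl /= size_takel ?(ltnW hl) //; split; last exact: Or44.
  by move=> l0; rewrite nth_take // x1w.
rewrite PE hl /= x1w -jE; split => //.
case: (ltnP (size P') l) => hl2; last first.
  have -> : size P' = l by apply/eqP; rewrite eqn_leq hl hl2.
  exact: Or44.
have nwj : nth x ys jf = w by rewrite jE nth_index.
have j0 : 0 < jf.
  rewrite lt0n; apply/eqP => h; move: nwj; rewrite h ysE /= => h'.
  by move: pxw; rewrite -h' pxy.
have jl : jf != (size ys).-1.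
  apply/eqP => h; move: nwj; rewrite h => h'; rewrite h' in am.
  apply: (missingP am (w := x)); first by rewrite esym.
  by rewrite psym.
have aj : alpha \in missing T q e phi (nth x ys jf.-1).
  have : jf.-1 < size ys1 by move: jlt; rewrite ysE /= -(prednK j0) ltnS.
  move/(pathP x Pa) => /=.
  have -> : nth x ys1 jf.-1 = w by rewrite -nwj ysE -{2}(prednK j0).
  by rewrite /fanR pxw ysE.
have inys i : i < size ys -> e x (nth x ys i) /\ nth x ys i != x.
  move=> il; have hin : nth x ys i \in ys by apply: mem_nth.
  have exi : e x (nth x ys i) by move/allP: A => /(_ _ hin).
  by split => //; apply/eqP => h; move: exi; rewrite h irr.
have fx := flip_missing_x pr abP sP bx ab.
have szp : (size ys).-1 < size ys by rewrite ysE.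
have j1s : jf.-1 < size ys by apply: leq_ltn_trans (leq_pred _) jlt.
case: (eqVneq (nth x ys jf.-1) (last x P')) => hv; last first.
  apply: Or42; split => //.
  have nE : nth x (take jf ys) (size (take jf ys)).-1 = nth x ys jf.-1.
    by rewrite size_takel ?(ltnW jlt) // nth_take // prednK.
  rewrite -nE; apply: shift_happy => //.
  - exact: take_uniq.
  - by apply/allP => z /mem_take zin; apply: (allP A).
  - by rewrite -size_eq0 size_takel ?(ltnW jlt) // -lt0n.
  - rewrite nE; apply: flip_missing_v => //; first by case: (inys _ j1s).
apply: Or43; split => //.
apply: shift_happy => //.
apply: flip_missing_v => //; first by case: (inys _ szp).
rewrite -hv nth_uniq //; apply/negP => /eqP h.
have hh : jf = size ys by rewrite -(prednK j0) -h prednK // ysE.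
by rewrite hh ltnn in jlt.
Qed.
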